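(* Let $R>r>0$ and let $K^{-1/2}_0$ and $\{\mathbb{E}(t)\}_{t\in[-1/2,1/2]}$ be as in the context. Then $\{\mathbb{E}(t)\}_{t\in[-1/2,1/2]}$ is a resolution of the identity on $K^{-1/2}_0$; namely, $$\langle f,g\rangle_{-1/2}=\int_{-1/2}^{1/2}d\langle f,\mathbb{E}(t)g\rangle_{-1/2}\quad\text{for all } f,g\in K^{-1/2}_0.$$ Moreover, $\lim_{t\to s}\mathbb{E}(t)=\mathbb{E}(s)$ for all $s\in[-1/2,1/2]$ (strongly).
   Context: Identify $\mathbb{R}^2$ with $\mathbb{C}$; for $a\in\mathbb{R}\setminus\{0\}$ let $B_a$ be the open disk of radius $|a|$ centered at $(a,0)$. Fix $R>r>0$, let $\Omega=B_R\setminus\overline{B_r}$, and put $q=\frac1{2r}-\frac1{2R}>0$. For $k\neq0$ let $\mathbb{S}(k)=\frac{1}{2|k|}\mathrm{diag}(1-e^{-|k|q},\,1+e^{-|k|q})$. $K^{-1/2}_0$ is the Hilbert space of pairs $\hat\varphi=(\hat\varphi_1,\hat\varphi_2)^T$ of measurable complex functions on $\mathbb{R}$ (mod a.e.) with $\int_{\mathbb{R}}\hat\varphi^T\mathbb{S}\overline{\hat\varphi}\,dk<\infty$, inner product $\langle\psi,\varphi\rangle_{-1/2}=\int_{\mathbb{R}}\hat\psi^T\mathbb{S}\overline{\hat\varphi}\,dk$ (in the paper such a pair represents a boundary density on $\partial\Omega$ after pulling back by $z\mapsto1/z$, Fourier transforming, and applying $P=\frac1{\sqrt2}\begin{bmatrix}-1&1\\1&1\end{bmatrix}$).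 For $s\in\mathbb{R}\cup\{\infty\}$ let $\mathcal{P}^1(s)(\hat\varphi_1,\hat\varphi_2)=(\chi_{(-\infty,s]}\hat\varphi_1,0)$, $\mathcal{P}^2(s)(\hat\varphi_1,\hat\varphi_2)=(0,\chi_{(-\infty,s]}\hat\varphi_2)$ (with $\chi_{(-\infty,\infty]}\equiv1$), $\mathbb{I}=\mathcal{P}^1(\infty)+\mathcal{P}^2(\infty)$, and $$\mathbb{E}(t)=\begin{cases}\mathcal{P}^1\!\left(-\frac{\ln(-2t)}{q}\right)-\mathcal{P}^1\!\left(\frac{\ln(-2t)}{q}\right),& t\in[-1/2,0),\\[2pt]\mathcal{P}^2\!\left(\frac{\ln(2t)}{q}\right)-\mathcal{P}^2\!\left(-\frac{\ln(2t)}{q}\right)+\mathbb{I},& t\in(0,1/2],\end{cases}\qquad \mathbb{E}(0)=\lim_{t\to0^+}\mathbb{E}(t).$$ A resolution of the identity means: each $\mathbb{E}(t)$ is an orthogonal projection, $\mathbb{E}(t)\mathbb{E}(s)=\mathbb{E}(\min(t,s))$, $\mathbb{E}$ is right-continuous, $\mathbb{E}(-1/2)=0$, $\mathbb{E}(1/2)=\mathbb{I}$. *)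

(* Defs.v *)
From mathcomp Require Import all_boot all_order all_algebra.
From mathcomp Require Import all_classical all_reals all_analysis.
From mathcomp Require Import complex.

Set Implicit Arguments. Unset Strict Implicit. Unset Printing Implicit Defensive.
Import Order.TTheory GRing.Theory Num.Theory.
Local Open Scope ring_scope.
Local Open Scope complex_scope.
Local Open Scope classical_set_scope.
Import numFieldNormedType.Exports.

(* A representative of an element of K^{-1/2}_0: a pair (phi_1, phi_2) of
   complex-valued functions on R (the quotient by a.e.-equality is handled by
   stating all equalities of elements a.e., see [eqK]). *)
Definition KT (R : realType) := ((R -> R[i]) * (R -> R[i]))%type.

Definition qpar (R : realType) (r Rad : R) : R := 1 / (2 * r) - 1 / (2 * Rad).

(* diagonal entries of S(k) = 1/(2|k|) diag(1 - e^{-|k|q}, 1 + e^{-|k|q}),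
   k <> 0; the value at k = 0 (a null set) is irrelevant and set to 0. *)
Definition S1 (R : realType) (q k : R) : R :=
  if k == 0 then 0 else (1 - expR (- (`|k| * q))) / (2 * `|k|).
Definition S2 (R : realType) (q k : R) : R :=
  if k == 0 then 0 else (1 + expR (- (`|k| * q))) / (2 * `|k|).

Definition sqc (R : realType) (z : R[i]) : R := (complex.Re z) ^+ 2 + (complex.Im z) ^+ 2.

Definition Kmem (R : realType) (q : R) (f : KT R) : Prop :=
  [/\ measurable_fun setT (fun k : R => complex.Re (f.1 k)),
      measurable_fun setT (fun k : R => complex.Im (f.1 k)),
      measurable_fun setT (fun k : R => complex.Re (f.2 k)),
      measurable_fun setT (fun k : R => complex.Im (f.2 k)) &
      (\int[@lebesgue_measure R]_(k in setT)
          ((S1 q k * sqc (f.1 k) + S2 q k * sqc (f.2 k))%:E) < +oo)%E].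

Definition innerK (R : realType) (q : R) (f g : KT R) : R[i] :=
  let h := fun k : R => (S1 q k)%:C * (f.1 k * (g.1 k)^*)
                      + (S2 q k)%:C * (f.2 k * (g.2 k)^*) in
  (Rintegral (@lebesgue_measure R) setT (fun k => complex.Re (h k)))%:C
  + 'i * (Rintegral (@lebesgue_measure R) setT (fun k => complex.Im (h k)))%:C.

Definition normK (R : realType) (q : R) (f : KT R) : R :=
  Num.sqrt (complex.Re (innerK q f f)).

Definition eqK (R : realType) (f g : KT R) : Prop :=
  {ae @lebesgue_measure R, forall k, f.1 k = g.1 k /\ f.2 k = g.2 k}.

Definition addK (R : realType) (f g : KT R) : KT R :=
  (fun k => f.1 k + g.1 k, fun k => f.2 k + g.2 k).
Definition subK (R : realType) (f g : KT R) : KT R :=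
  (fun k => f.1 k - g.1 k, fun k => f.2 k - g.2 k).
Definition zeroK (R : realType) : KT R := (fun _ => 0, fun _ => 0).

Definition chi (R : realType) (s : \bar R) (k : R) : bool := (k%:E <= s)%E.

Definition P1 (R : realType) (s : \bar R) (f : KT R) : KT R :=
  (fun k => if chi s k then f.1 k else 0, fun _ => 0).
Definition P2 (R : realType) (s : \bar R) (f : KT R) : KT R :=
  (fun _ => 0, fun k => if chi s k then f.2 k else 0).

(* E(t), t in [-1/2, 1/2].  E(0) := lim_{t->0+} E(t), obtained by letting
   ln(2t)/q -> -oo in the formula for t > 0. *)
Definition Eop (R : realType) (q t : R) (f : KT R) : KT R :=
  if t < 0 then
    subK (P1 ((- @ln R (- (2 * t)) / q)%:E) f) (P1 ((@ln R (- (2 * t)) / q)%:E) f)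
  else if t == 0 then
    addK (subK (P2 -oo%E f) (P2 +oo%E f)) f
  else
    addK (subK (P2 ((@ln R (2 * t) / q)%:E) f) (P2 ((- @ln R (2 * t) / q)%:E) f)) f.

Definition Ival (R : realType) : set R := [set t | - (1 / 2) <= t <= 1 / 2].
Arguments Ival R : clear implicits.

Definition orth_proj (R : realType) (q : R) (A : KT R -> KT R) : Prop :=
  [/\ (forall f, Kmem q f -> Kmem q (A f)),
      (forall f, Kmem q f -> eqK (A (A f)) (A f)) &
      (forall f g, Kmem q f -> Kmem q g -> innerK q (A f) g = innerK q f (A g))].

Definition resolution_of_identity (R : realType) (q : R) (E : R -> KT R -> KT R) : Prop :=
  [/\ (forall t, Ival R t -> orth_proj q (E t)),
      (forall t s f, Ival R t -> Ival R s -> Kmem q f ->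
          eqK (E t (E s f)) (E (Order.min t s) f)),
      (forall s f, Ival R s -> Kmem q f ->
          (fun t => normK q (subK (E t f) (E s f)))
             @ within (Ival R) (at_right s) --> (0 : R)),
      (forall f, Kmem q f -> eqK (E (- (1 / 2)) f) (zeroK R)) &
      (forall f, Kmem q f -> eqK (E (1 / 2) f) f)].

Definition is_RS_integral (R : realType) (a b : R) (h F : R -> R[i]) (I : R[i]) : Prop :=
  forall eps : R, 0 < eps -> exists delta : R, 0 < delta /\
    forall (n : nat) (x c : nat -> R), x 0%N = a -> x n = b ->
      (forall i, (i < n)%N -> x i <= c i <= x i.+1 /\ x i.+1 - x i < delta) ->
      Num.sqrt (sqc ((\sum_(i < n) h (c i) * (F (x i.+1) - F (x i))) - I)) < eps.

(* Main.v *)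
Require Import Defs.
From mathcomp Require Import all_boot all_order all_algebra.
From mathcomp Require Import all_classical all_reals all_analysis.
From mathcomp Require Import complex ring lra.
From mathcomp Require Import measurable_realfun.
Import Order.TTheory GRing.Theory Num.Theory.
Local Open Scope ring_scope.
Local Open Scope complex_scope.
Local Open Scope classical_set_scope.
Import numFieldNormedType.Exports.
Set Implicit Arguments. Unset Strict Implicit. Unset Printing Implicit Defensive.

Section Aux.
Variable R : realType.
Variable q : R.
Hypothesis hq : 0 < q.

Definition mask (c1 c2 : R -> bool) (f : KT R) : KT R :=
  (fun k => if c1 k then f.1 k else 0, fun k => if c2 k then f.2 k else 0).

Definition cc1 (t k : R) : bool :=
  (- (2 * t) < expR (q * k)) && (- (2 * t) <= expR (- (q * k))).
Definition cc2 (t k : R) : bool :=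
  (expR (q * k) <= 2 * t) || (expR (- (q * k)) < 2 * t).

Lemma chi_fin (x k : R) : chi x%:E k = (k <= x).
Proof. by rewrite /chi lee_fin. Qed.
Lemma chi_Ny (k : R) : chi -oo%E k = false.
Proof. by rewrite /chi. Qed.
Lemma chi_y (k : R) : chi +oo%E k = true.
Proof. by rewrite /chi leey. Qed.

Lemma le_ln (y x : R) : 0 < y -> (ln y <= x) = (y <= expR x).
Proof. by move=> y0; rewrite -ler_expR lnK // posrE. Qed.
Lemma lt_ln (y x : R) : 0 < y -> (ln y < x) = (y < expR x).
Proof. by move=> y0; rewrite -ltr_expR lnK // posrE. Qed.
Lemma ge_ln (y x : R) : 0 < y -> (x <= ln y) = (expR x <= y).
Proof. by move=> y0; rewrite -ler_expR lnK // posrE. Qed.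
Lemma gt_ln (y x : R) : 0 < y -> (x < ln y) = (expR x < y).
Proof. by move=> y0; rewrite -ltr_expR lnK // posrE. Qed.

Lemma Eop_mask (t : R) (f : KT R) : Ival R t -> Eop q t f = mask (cc1 t) (cc2 t) f.
Proof.
move=> /andP[t1 t2].
rewrite /Eop /mask /addK /subK /P1 /P2 /=.
have [tlt0|tge0] := ltP t 0.
  have y0 : 0 < - (2 * t) by lra.
  have y1 : - (2 * t) <= 1 by lra.
  have l0 : ln (- (2 * t)) <= 0 by rewrite ln_le0.
  congr pair; apply/funext => k /=; last first.
    rewrite /cc2; have -> : expR (q * k) <= 2 * t = false.
      by apply/negbTE; rewrite -ltNge (lt_le_trans _ (ltW (expR_gt0 _))) //; lra.
    have -> : expR (- (q * k)) < 2 * t = false.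
      by apply/negbTE; rewrite -leNgt (le_trans _ (ltW (expR_gt0 _))) //; lra.
    by rewrite subr0.
  rewrite !chi_fin /cc1.
  have e1 : (k <= - ln (- (2 * t)) / q) = (- (2 * t) <= expR (- (q * k))).
    by rewrite ler_pdivlMr // -(le_ln _ y0) lerNr (mulrC q k).
  have e2 : (k <= ln (- (2 * t)) / q) = ~~ (- (2 * t) < expR (q * k)).
    by rewrite ler_pdivlMr // -(lt_ln _ y0) -leNgt (mulrC q k).
  have imp : k <= ln (- (2 * t)) / q -> k <= - ln (- (2 * t)) / q.
    move=> h; apply: (le_trans h); rewrite ler_pM2r ?invr_gt0 //; lra.
  move: imp; rewrite e1 e2.
  case: (- (2 * t) < expR (q * k)) => /=; case: (- (2 * t) <= expR (- (q * k))) => //=;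
    rewrite ?subrr ?subr0 //; by move=> /(_ isT).
have c1 k : cc1 t k.
  by rewrite /cc1; apply/andP; split; apply: (le_lt_trans _ (expR_gt0 _)) || apply: (le_trans _ (ltW (expR_gt0 _))); lra.
have [t0|tn0] := eqVneq t 0.
  congr pair; apply/funext => k /=; first by rewrite c1 subr0 add0r.
  rewrite /chi leey /cc2 t0 !mulr0 !leNgt !expR_gt0 /= sub0r addNr ltNge (ltW (expR_gt0 _)) //=.
have tgt0 : 0 < t by rewrite lt_neqAle eq_sym tn0.
have y0 : 0 < 2 * t by lra.
have y1 : 2 * t <= 1 by lra.
have l0 : ln (2 * t) <= 0 by rewrite ln_le0.
congr pair; apply/funext => k /=; first by rewrite c1 subr0 add0r.
rewrite !chi_fin /cc2.
have e1 : (k <= ln (2 * t) / q) = (expR (q * k) <= 2 * t).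
  by rewrite ler_pdivlMr // -(ge_ln _ y0) (mulrC q k).
have e2 : (k <= - ln (2 * t) / q) = ~~ (expR (- (q * k)) < 2 * t).
  by rewrite ler_pdivlMr // -(gt_ln _ y0) -leNgt lerNr (mulrC q k).
have imp : k <= ln (2 * t) / q -> k <= - ln (2 * t) / q.
  move=> h; apply: (le_trans h); rewrite ler_pM2r ?invr_gt0 //; lra.
move: imp; rewrite e1 e2.
case: (expR (q * k) <= 2 * t) => /=; case: (expR (- (q * k)) < 2 * t) => //=;
  rewrite ?subrr ?subr0 ?add0r ?addNr //; by move=> /(_ isT).
Qed.

Lemma cc1_mono (t t' k : R) : t <= t' -> cc1 t k -> cc1 t' k.
Proof.
move=> tt /andP[a b]; apply/andP; split.
  by apply: le_lt_trans a; lra.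
by apply: le_trans b; lra.
Qed.

Lemma cc2_mono (t t' k : R) : t <= t' -> cc2 t k -> cc2 t' k.
Proof.
move=> tt /orP[a|b]; apply/orP; [left|right].
  by apply: (le_trans a); lra.
by apply: (lt_le_trans b); lra.
Qed.

Lemma cc1_min (t s k : R) : cc1 t k && cc1 s k = cc1 (Order.min t s) k.
Proof.
have [ts|st] := leP t s.
   case h: (cc1 t k) => //=; exact: cc1_mono h.
case h: (cc1 s k); rewrite ?andbT ?andbF //.
exact: cc1_mono (ltW st) h.
Qed.

Lemma cc2_min (t s k : R) : cc2 t k && cc2 s k = cc2 (Order.min t s) k.
Proof.
have [ts|st] := leP t s.
  case h: (cc2 t k) => //=; exact: cc2_mono h.
case h: (cc2 s k); rewrite ?andbT ?andbF //.
exact: cc2_mono (ltW st) h.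
Qed.

Lemma mask_mask a1 a2 b1 b2 (f : KT R) :
  mask a1 a2 (mask b1 b2 f) = mask (fun k => a1 k && b1 k) (fun k => a2 k && b2 k) f.
Proof.
rewrite /mask /=; congr pair; apply/funext => k; by case: (a1 k); case: (b1 k); case: (a2 k); case: (b2 k).
Qed.

Lemma Ival_min (t s : R) : Ival R t -> Ival R s -> Ival R (Order.min t s).
Proof. by move=> Ht Hs; have [ts|st] := leP t s. Qed.

Lemma Eop_comp (t s : R) (f : KT R) : Ival R t -> Ival R s ->
  Eop q t (Eop q s f) = Eop q (Order.min t s) f.
Proof.
move=> Ht Hs; rewrite !Eop_mask //; last exact: Ival_min.
rewrite mask_mask; congr mask; apply/funext => k; [exact: cc1_min|exact: cc2_min].
Qed.

Lemma Ival_lo : Ival R (- (1 / 2)).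
Proof. rewrite /Ival /=; apply/andP; split; lra. Qed.
Lemma Ival_hi : Ival R (1 / 2).
Proof. rewrite /Ival /=; apply/andP; split; lra. Qed.

Lemma Eop_lo (f : KT R) : Eop q (- (1 / 2)) f = zeroK R.
Proof.
rewrite Eop_mask; last exact: Ival_lo.
have e : 2 * (- (1 / 2)) = - 1 :> R by lra.
rewrite /mask /zeroK; congr pair; apply/funext => k; last first.
  rewrite /cc2 e; have h1 := expR_gt0 (q * k); have h2 := expR_gt0 (- (q * k)).
  case: ifPn => // /orP[] ? ; exfalso; lra.
rewrite /cc1; case: ifPn => // /andP[a b]; exfalso.
move: a b; rewrite e opprK -expR0 ltr_expR ler_expR; lra.
Qed.

Lemma Eop_hi (f : KT R) : Eop q (1 / 2) f = f.
Proof.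
rewrite Eop_mask; last exact: Ival_hi.
have e : 2 * (1 / 2) = 1 :> R by lra.
rewrite /mask; case: f => f1 f2 /=; congr pair; apply/funext => k.
  rewrite /cc1 e; case: ifPn => // /negP; case; apply/andP; split.
    by apply: (lt_trans _ (expR_gt0 _)); lra.
  by apply: (le_trans _ (ltW (expR_gt0 _))); lra.
rewrite /cc2 e -expR0 ler_expR ltr_expR; case: ifPn => // /negP; case.
apply/orP; have [h|h] := leP (q * k) 0; [left|right] => //; lra.
Qed.
End Aux.
Section B.
Variable R : realType.

Lemma measurable_inv : measurable_fun [set: R] (@GRing.inv R).
Proof.
rewrite (_ : GRing.inv = fun x : R => if x == 0 then 0 else x^-1); last first.
  by apply/funext => x; case: eqP => // ->; rewrite invr0.
apply: measurable_fun_if => //.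
- by apply: measurable_realfun.measurable_fun_eqr.
- apply: (@measurable_funS _ _ _ _ [set r : R | r != 0]) => //.
  + exact: measurable_realfun.open_measurable.
  + by move=> x /= [_ /negbT].
  + apply: measurable_realfun.open_continuous_measurable_fun => //; apply/in_setP => x /= x0.
    exact: inv_continuous.
Qed.

Variable q : R.
Hypothesis hq : 0 < q.

Lemma S1E : S1 q = fun k => (1 - expR (- (`|k| * q))) * (2 * `|k|)^-1.
Proof. by apply/funext => k; rewrite /S1; case: eqP => // ->; rewrite normr0 mulr0 invr0 mulr0. Qed.
Lemma S2E : S2 q = fun k => (1 + expR (- (`|k| * q))) * (2 * `|k|)^-1.
Proof. by apply/funext => k; rewrite /S2; case: eqP => // ->; rewrite normr0 mulr0 invr0 mulr0. Qed.

Lemma mS0 : measurable_fun [set: R] (fun k : R => (2 * `|k|)^-1).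
Proof.
apply: (measurableT_comp measurable_inv).
apply: measurable_funM => //.
Qed.

Lemma mexp : measurable_fun [set: R] (fun k : R => expR (- (`|k| * q))).
Proof.
apply: (measurableT_comp (@measurable_expR R)).
apply: measurable_funN; apply: measurable_funM => //.
Qed.

Lemma mS1 : measurable_fun [set: R] (S1 q).
Proof. rewrite S1E; apply: measurable_funM => //; [apply: measurable_funB => //; exact: mexp|exact: mS0]. Qed.
Lemma mS2 : measurable_fun [set: R] (S2 q).
Proof. rewrite S2E; apply: measurable_funM => //; [apply: measurable_funD => //; exact: mexp|exact: mS0]. Qed.

Lemma S1_ge0 k : 0 <= S1 q k.
Proof.
rewrite /S1; case: eqP => // _; apply: divr_ge0; last by rewrite mulr_ge0.
rewrite subr_ge0 expR_le1 oppr_le0 mulr_ge0 //; exact: ltW.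
Qed.
Lemma S2_ge0 k : 0 <= S2 q k.
Proof.
rewrite /S2; case: eqP => // _.

Qed.

Definition wK (f : KT R) (k : R) : R := S1 q k * sqc (f.1 k) + S2 q k * sqc (f.2 k).
Definition Kmeas (f : KT R) : Prop :=
  [/\ measurable_fun [set: R] (fun k : R => complex.Re (f.1 k)),
      measurable_fun [set: R] (fun k : R => complex.Im (f.1 k)),
      measurable_fun [set: R] (fun k : R => complex.Re (f.2 k)) &
      measurable_fun [set: R] (fun k : R => complex.Im (f.2 k))].

Lemma Kmem_meas f : Kmem q f -> Kmeas f.
Proof. by case. Qed.

Lemma sqc_ge0 (z : R[i]) : 0 <= sqc z.
Proof. by rewrite /sqc addr_ge0 // sqr_ge0. Qed.

Lemma wK_ge0 f k : 0 <= wK f k.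
Proof. by rewrite /wK addr_ge0 // mulr_ge0 // ?S1_ge0 ?S2_ge0 // sqc_ge0. Qed.

Lemma msqc (z : R -> R[i]) : measurable_fun [set: R] (fun k => complex.Re (z k)) ->
  measurable_fun [set: R] (fun k => complex.Im (z k)) ->
  measurable_fun [set: R] (fun k => sqc (z k)).
Proof. by move=> h1 h2; rewrite /sqc; apply: measurable_funD; apply: measurable_funX. Qed.

Lemma mwK f : Kmeas f -> measurable_fun [set: R] (wK f).
Proof.
case=> h1 h2 h3 h4; rewrite /wK; apply: measurable_funD; apply: measurable_funM;
  [exact: mS1|exact: msqc|exact: mS2|exact: msqc].
Qed.

Lemma mcc1 t : measurable_fun [set: R] (cc1 q t).
Proof.
rewrite /cc1; apply: measurable_and.
  apply: measurable_fun_ltr => //.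
  exact: (measurableT_comp (@measurable_expR R)).
apply: measurable_fun_ler => //.
apply: (measurableT_comp (@measurable_expR R)).
exact: measurable_funN.
Qed.

Lemma mcc2 t : measurable_fun [set: R] (cc2 q t).
Proof.
rewrite /cc2; apply: measurable_or.
  apply: measurable_fun_ler => //.
  exact: (measurableT_comp (@measurable_expR R)).
apply: measurable_fun_ltr => //.
apply: (measurableT_comp (@measurable_expR R)).
exact: measurable_funN.
Qed.

Lemma mp_if (c : R -> bool) (z : R -> R[i]) (p : R[i] -> R) : p 0 = 0 ->
  measurable_fun [set: R] c ->
  measurable_fun [set: R] (fun k => p (z k)) ->
  measurable_fun [set: R] (fun k => p (if c k then z k else 0)).
Proof.
move=> p0 mc mz.
rewrite (_ : (fun k => _) = (fun k => if c k then p (z k) else 0)); last first.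
  by apply/funext => k; case: (c k).
exact: measurable_fun_ifT.
Qed.

Lemma Kmeas_mask c1 c2 f : measurable_fun [set: R] c1 -> measurable_fun [set: R] c2 ->
  Kmeas f -> Kmeas (mask c1 c2 f).
Proof.
move=> m1 m2 [h1 h2 h3 h4]; split; rewrite /mask /=; exact: mp_if.
Qed.

Lemma mp_sub (z w : R -> R[i]) (p : R[i] -> R) : (forall x y, p (x - y) = p x - p y) ->
  measurable_fun [set: R] (fun k => p (z k)) ->
  measurable_fun [set: R] (fun k => p (w k)) ->
  measurable_fun [set: R] (fun k => p (z k - w k)).
Proof.
move=> pB mz mw.
rewrite (_ : (fun k => _) = (fun k => p (z k) - p (w k))); last first.
  by apply/funext => k; rewrite pB.
exact: measurable_funB.
Qed.

Lemma ReB (x y : R[i]) : complex.Re (x - y) = complex.Re x - complex.Re y.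
Proof. by case: x; case: y. Qed.
Lemma ImB (x y : R[i]) : complex.Im (x - y) = complex.Im x - complex.Im y.
Proof. by case: x; case: y. Qed.

Lemma Kmeas_sub f g : Kmeas f -> Kmeas g -> Kmeas (subK f g).
Proof.
move=> [h1 h2 h3 h4] [g1 g2 g3 g4]; split; rewrite /subK /=; apply: mp_sub => //;
  [exact: ReB|exact: ImB|exact: ReB|exact: ImB].
Qed.

Lemma sqc_if (b : bool) (z : R[i]) : sqc (if b then z else 0) <= sqc z.
Proof. by case: b => //; rewrite /sqc /= expr0n /= addr0 sqc_ge0. Qed.

Lemma Kmem_mask c1 c2 f : measurable_fun [set: R] c1 -> measurable_fun [set: R] c2 ->
  Kmem q f -> Kmem q (mask c1 c2 f).
Proof.
move=> m1 m2 Kf; have Mf := Kmem_meas Kf.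
have [a1 a2 a3 a4] := Kmeas_mask m1 m2 Mf.
split => //; case: Kf => _ _ _ _; apply: le_lt_trans.
apply: ge0_le_integral => //.
- by move=> k _; rewrite lee_fin; exact: (wK_ge0 (mask c1 c2 f) k).
- by apply/measurable_EFinP; exact: (mwK (Kmeas_mask m1 m2 Mf)).
- by apply/measurable_EFinP; exact: (mwK Mf).
move=> k _; rewrite lee_fin /mask /=.
by rewrite lerD // ler_wpM2l // ?S1_ge0 ?S2_ge0 // sqc_if.
Qed.

Lemma ReK (x y : R) : complex.Re (x%:C + 'i * y%:C) = x.
Proof. by rewrite /=; ring. Qed.

Lemma Re_h (f : KT R) k :
  complex.Re ((S1 q k)%:C * (f.1 k * (f.1 k)^*) + (S2 q k)%:C * (f.2 k * (f.2 k)^*)) = wK f k.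
Proof. by rewrite /wK /sqc; case: (f.1 k) => a b; case: (f.2 k) => c d /=; ring. Qed.

Lemma normKE f : normK q f = Num.sqrt (Rintegral (@lebesgue_measure R) [set: R] (wK f)).
Proof.
rewrite /normK /innerK ReK; congr Num.sqrt; apply: eq_Rintegral => k _; exact: Re_h.
Qed.

Lemma conj0 : (0 : R[i])^* = 0.
Proof. by rewrite /= oppr0. Qed.

Lemma inner_mask c1 c2 f g : innerK q (mask c1 c2 f) g = innerK q f (mask c1 c2 g).
Proof.
rewrite /innerK /mask /=; congr (_%:C + _ * _%:C); apply: eq_Rintegral => k _;
 by case: (c1 k); case: (c2 k); move: (f.1 k) (f.2 k) (g.1 k) (g.2 k) => [a b] [c d] [e e'] [u v] /=; ring.
Qed.

Lemma inner_zero f : innerK q f (zeroK R) = 0.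
Proof.
rewrite /innerK /zeroK /=.
rewrite (_ : (fun k => _) = (fun _ => 0)); last first.
  by apply/funext => k; move: (f.1 k) (f.2 k) => [a b] [c d] /=; ring.
rewrite (_ : (fun k => _) = (fun _ => 0)); last first.
  by apply/funext => k; move: (f.1 k) (f.2 k) => [a b] [c d] /=; ring.
by rewrite Rintegral_cst // mul0r mulr0 addr0.
Qed.
End B.
Section C.
Variable R : realType.
Local Notation mu := (@lebesgue_measure R).

Lemma dct_seq (s : R) (phi : R -> R -> R) (g : R -> R) (N : set R) (u : nat -> R) :
  (forall t, measurable_fun [set: R] (phi t)) -> measurable_fun [set: R] g ->
  (\int[mu]_(k in [set: R]) (g k)%:E < +oo)%E ->
  (forall t k, 0 <= phi t k <= g k) ->
  measurable N -> mu N = 0%E ->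
  (forall k, ~ N k -> \forall t \near s, phi t k = 0) ->
  u n @[n --> \oo] --> s ->
  Rintegral mu [set: R] (phi (u n)) @[n --> \oo] --> 0.
Proof.
move=> mphi mg ig hb mN N0 hN us.
have := @dominated_convergence _ _ _ mu [set: R] measurableT
  (fun n k => (phi (u n) k)%:E) (cst 0%E) (fun k => (g k)%:E).
case.
- by move=> n; apply/measurable_EFinP; exact: mphi.
- exact: measurable_cst.
- exists N; split => // k /= nP; apply: contrapT => Nk; apply: nP => _.
  have H1 : \forall n \near \oo, phi (u n) k = 0.
    exact: (us _ (hN k Nk)).
  apply: cvg_near_cst; move: H1; apply: filterS => n /= ->.
  by [].
- apply/integrableP; split; first by apply/measurable_EFinP.
  apply: le_lt_trans ig; rewrite le_eqVlt; apply/orP; left; apply/eqP.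
  apply: eq_integral => k _; rewrite abse_EFin ger0_norm //.
  by have /andP[h1 h2] := hb s k; exact: le_trans h2.
- apply: aeW => k n _; rewrite abse_EFin lee_fin ger0_norm.
    by have /andP[] := hb (u n) k.
  by have /andP[] := hb (u n) k.
move=> _ _; rewrite integral0 => H.
exact: (fine_cvg H).
Qed.

Lemma dct_near (s : R) (phi : R -> R -> R) (g : R -> R) (N : set R) :
  (forall t, measurable_fun [set: R] (phi t)) -> measurable_fun [set: R] g ->
  (\int[mu]_(k in [set: R]) (g k)%:E < +oo)%E ->
  (forall t k, 0 <= phi t k <= g k) ->
  measurable N -> mu N = 0%E ->
  (forall k, ~ N k -> \forall t \near s, phi t k = 0) ->
  Rintegral mu [set: R] (phi t) @[t --> s] --> 0.
Proof.
move=> mphi mg ig hb mN N0 hN.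
set F := fun t => Rintegral mu [set: R] (phi t).
apply/cvgrPdist_lt => e e0; apply: contrapT => H.
have hex : forall n : nat, exists t, `|s - t| < n.+1%:R^-1 /\ ~ (`|0 - F t| < e).
  move=> n; apply: contrapT => hn; apply: H.
  apply/nbhs_ballP; exists n.+1%:R^-1 => //= t bt.
  apply: contrapT => ht; apply: hn; exists t; split => //.
have [v hv] := choice hex.
have vs : v n @[n --> \oo] --> s.
  apply/cvgrPdist_lt => r r0.
  have := near_infty_natSinv_lt (PosNum r0); apply: filterS => n /= hn.
  exact: lt_trans (proj1 (hv n)) hn.
have := dct_seq mphi mg ig hb mN N0 hN vs.
move/cvgrPdist_lt => /(_ e e0) [M _ /(_ M (leqnn M))].
exact: (proj2 (hv M)).
Qed.

End C.

Section D.
Variable R : realType.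
Variable q : R.
Hypothesis hq : 0 < q.
Local Notation mu := (@lebesgue_measure R).

Lemma near_cmp (c b s : R) : c * s != b ->
  \forall t \near s, ((c * t < b) = (c * s < b)) /\ ((c * t <= b) = (c * s <= b)).
Proof.
move=> csb; have cont := @mulrl_continuous R c s.
case: (ltgtP (c * s) b) => [lt|gt|eq]; last by rewrite eq eqxx in csb.
- have H : \forall x \near c * s, x < b := lt_nbhsl lt.
  have H2 : \forall t \near s, c * t < b := cont _ H.
  move: H2; apply: filterS => t /= ht.
  by rewrite ht (ltW ht).
- have H : \forall x \near c * s, b < x := lt_nbhsr gt.
  have H2 : \forall t \near s, b < c * t := cont _ H.
  move: H2; apply: filterS => t /= ht.
  by rewrite ltNge (ltW ht) leNgt ht.
Qed.

Lemma near_cc (s k : R) : expR (q * k) != - (2 * s) -> expR (- (q * k)) != - (2 * s) ->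
  expR (q * k) != 2 * s -> expR (- (q * k)) != 2 * s ->
  \forall t \near s, cc1 q t k = cc1 q s k /\ cc2 q t k = cc2 q s k.
Proof.
have e : forall t : R, - (2 * t) = (-2) * t by move=> t; rewrite mulNr.
move=> n1 n2 n3 n4.
have H1 := @near_cmp (-2) (expR (q * k)) s ltac:(by rewrite -e eq_sym).
have H2 := @near_cmp (-2) (expR (- (q * k))) s ltac:(by rewrite -e eq_sym).
have H3 := @near_cmp 2 (expR (q * k)) s ltac:(by rewrite eq_sym).
have H4 := @near_cmp 2 (expR (- (q * k))) s ltac:(by rewrite eq_sym).
near=> t.
have [a1 a2] : ((-2) * t < expR (q * k)) = ((-2) * s < expR (q * k)) /\ ((-2) * t <= expR (q * k)) = ((-2) * s <= expR (q * k)).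
  by near: t; exact: H1.
have [b1 b2] : ((-2) * t < expR (- (q * k))) = ((-2) * s < expR (- (q * k))) /\ ((-2) * t <= expR (- (q * k))) = ((-2) * s <= expR (- (q * k))).
  by near: t; exact: H2.
have [c1 c2] : ((2) * t < expR (q * k)) = ((2) * s < expR (q * k)) /\ ((2) * t <= expR (q * k)) = ((2) * s <= expR (q * k)).
  by near: t; exact: H3.
have [d1 d2] : ((2) * t < expR (- (q * k))) = ((2) * s < expR (- (q * k))) /\ ((2) * t <= expR (- (q * k))) = ((2) * s <= expR (- (q * k))).
  by near: t; exact: H4.
split.
  by rewrite /cc1 !e a1 b2.
by rewrite /cc2 !(leNgt (expR (q * k))) !(ltNge (expR (- (q * k)))) c1 d2.
Unshelve. all: by end_near.
Qed.

Definition Nset (s : R) : set R :=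
  [set ln (- (2 * s)) / q] `|` [set - (ln (- (2 * s)) / q)] `|`
  [set ln (2 * s) / q] `|` [set - (ln (2 * s) / q)].

Lemma mNset s : measurable (Nset s).
Proof. by rewrite /Nset; repeat apply: measurableU; exact: measurable_set1. Qed.

Lemma Nset0 s : mu (Nset s) = 0%E.
Proof.
have m1 : forall x : R, measurable [set x] by move=> x; exact: measurable_set1.
rewrite /Nset.
apply: (@null_set_setU _ _ _ mu); rewrite ?lebesgue_measure_set1 //;
  repeat apply: measurableU => //.
apply: (@null_set_setU _ _ _ mu); rewrite ?lebesgue_measure_set1 //;
  repeat apply: measurableU => //.
apply: (@null_set_setU _ _ _ mu); rewrite ?lebesgue_measure_set1 //.
all: exact: lebesgue_measure_set1.
Qed.

Lemma notN s k : ~ Nset s k ->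
  [/\ expR (q * k) != - (2 * s), expR (- (q * k)) != - (2 * s),
      expR (q * k) != 2 * s & expR (- (q * k)) != 2 * s].
Proof.
have qn0 : q != 0 by rewrite gt_eqF.
move=> nk; split; apply/eqP => h; apply: nk; rewrite /Nset /=.
- by left; left; left; rewrite -h expRK (mulrC q k) mulfK.
- by left; left; right; rewrite -h expRK mulNr (mulrC q k) mulfK // opprK.
- by left; right; rewrite -h expRK (mulrC q k) mulfK.
- by right; rewrite -h expRK mulNr (mulrC q k) mulfK // opprK.
Qed.

Lemma sqc0 : sqc (0 : R[i]) = 0.
Proof. by rewrite /sqc /= expr0n /= addr0. Qed.
Lemma sqcN (z : R[i]) : sqc (- z) = sqc z.
Proof. by case: z => a b; rewrite /sqc /= !sqrrN. Qed.

Lemma sqc_diff (a b : bool) (z : R[i]) :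
  sqc ((if a then z else 0) - (if b then z else 0)) <= sqc z.
Proof.
case: a; case: b; rewrite ?subrr ?subr0 ?sub0r ?sqc0 ?sqcN ?sqc_ge0 //.
Qed.

Lemma Econt (s : R) (f : KT R) : Ival R s -> Kmem q f ->
  (fun t => normK q (subK (Eop q t f) (Eop q s f))) @ within (Ival R) (nbhs s) --> 0.
Proof.
move=> Is Kf.
pose phi := fun t k => wK q (subK (mask (cc1 q t) (cc2 q t) f) (mask (cc1 q s) (cc2 q s) f)) k.
have Hphi : Rintegral mu setT (phi t) @[t --> s] --> 0.
  apply: (@dct_near _ s phi (wK q f) (Nset s)).
  - move=> t; apply: mwK; apply: Kmeas_sub; (apply: Kmeas_mask; [exact: mcc1|exact: mcc2|exact: (Kmem_meas Kf)]).
  - exact: (mwK q (Kmem_meas Kf)).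
  - by case: Kf.
  - move=> t k; apply/andP; split; first exact: wK_ge0.
    rewrite /phi /wK /subK /mask /=.
    by rewrite lerD // ler_wpM2l // ?S1_ge0 ?S2_ge0 // sqc_diff.
  - exact: mNset.
  - exact: Nset0.
  - move=> k nk; have [n1 n2 n3 n4] := notN nk.
    move: (near_cc n1 n2 n3 n4); apply: filterS => t [e1 e2].
    by rewrite /phi /wK /subK /mask /= e1 e2 !subrr sqc0 !mulr0 addr0.
have Hsq : Num.sqrt (Rintegral mu setT (phi t)) @[t --> s] --> 0.
  rewrite -sqrtr0; exact: (continuous_cvg _ (@sqrt_continuous R 0) Hphi).
have eqF : {near within (Ival R) (nbhs s),
    (fun t => Num.sqrt (Rintegral mu setT (phi t))) =1
    (fun t => normK q (subK (Eop q t f) (Eop q s f)))}.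
  suff H : \forall t \near s, Ival R t -> Num.sqrt (Rintegral mu setT (phi t)) =
      normK q (subK (Eop q t f) (Eop q s f)) by exact: H.
  near=> t => It.
  by rewrite normKE !Eop_mask.
apply: (cvg_trans (near_eq_cvg eqF)).
exact: cvg_within_filter Hsq.
Unshelve. all: by end_near.
Qed.

End D.

Unset Implicit Arguments.
Theorem proposition3p4 (R : realType) (r Rad : R) (hr : 0 < r) (hrR : r < Rad) :
  let q := qpar r Rad in
  resolution_of_identity q (Eop q)
  /\ (forall f g : KT R, Kmem q f -> Kmem q g ->
        is_RS_integral (- (1 / 2)) (1 / 2) (fun _ => 1)
          (fun t => innerK q f (Eop q t g)) (innerK q f g))
  /\ (forall (s : R) (f : KT R), Ival R s -> Kmem q f ->
        (fun t => normK q (subK (Eop q t f) (Eop q s f)))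
           @ within (Ival R) (nbhs s) --> (0 : R)).
Proof.
move=> q.
have hq : 0 < q.
  rewrite /q /qpar subr_gt0 !mul1r ltf_pV2 ?posrE; lra.
split; last split.
- split.
  + move=> t It; split.
    * move=> f Kf; rewrite Eop_mask //; apply: Kmem_mask => //; [exact: mcc1|exact: mcc2].
    * by move=> f Kf; rewrite Eop_comp // minxx; apply: (aeW (@lebesgue_measure R)) => k; split.
    * by move=> f g Kf Kg; rewrite !Eop_mask //; exact: inner_mask.
  + by move=> t s f It Is Kf; rewrite Eop_comp //; apply: (aeW (@lebesgue_measure R)) => k; split.
  + move=> s f Is Kf P /(Econt hq Is Kf) HP.
    exact: (@cvg_within R (nbhs s) _ (fun u => s < u) _ HP).
  + by move=> f Kf; rewrite Eop_lo //; apply: (aeW (@lebesgue_measure R)) => k; split.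
  + by move=> f Kf; rewrite Eop_hi //; apply: (aeW (@lebesgue_measure R)) => k; split.
- move=> f g Kf Kg eps e0; exists 1; split => // n x c x0 xn _.
  under eq_bigr do rewrite mul1r.
  rewrite -(big_mkord xpredT (fun i => innerK q f (Eop q (x i.+1) g) - innerK q f (Eop q (x i) g))).
  by rewrite telescope_sumr // xn x0 (Eop_hi hq g) (Eop_lo hq g) inner_zero subr0 subrr sqc0 sqrtr0.
- move=> s f Is Kf; exact: Econt.
Qed.
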